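(* Let $X$ be a countably infinite set, $W\subseteq\mathbb R^X$ containing the worlds below, and $\succeq$ a preorder on $W$ satisfying Strong Pareto and Permutation Invariance. Let $A,B\subseteq X$ be infinite and disjoint, and $k,l\in\mathbb R$ with $k\neq l$. Define $w(x)=k$ for $x\in A$, $w(x)=l$ otherwise, and $v(x)=k$ for $x\in B$, $v(x)=l$ otherwise. Then $w$ and $v$ are incomparable: neither $w\succeq v$ nor $v\succeq w$.
   Context: For a preorder $\succeq$, $w\succ v$ means $w\succeq v$ and not $v\succeq w$. For a permutation $\pi$ of $X$, $\pi(w)(x)=w(\pi(x))$. Strong Pareto: for all $w,v\in W$, if $w(x)\ge v(x)$ for all $x$ and $w(x)>v(x)$ for some $x$, then $w\succ v$. Permutation Invariance: for all $w,v\in W$ and every permutation $\pi$ of $X$, $w\succeq v$ iff $\pi(w)\succeq\pi(v)$. (Here $W=\{k,l\}^X$ may be taken, so that $W$ is closed under permutations.) *)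

(* Defs.v *)
From HB Require Import structures.
From mathcomp Require Import all_boot all_order all_algebra.
From mathcomp Require Import boolp classical_sets cardinality reals.
Export boolp classical_sets cardinality reals.
Set Implicit Arguments. Unset Strict Implicit. Unset Printing Implicit Defensive.
Import Order.TTheory GRing.Theory Num.Theory.
Local Open Scope classical_set_scope.
Local Open Scope ring_scope.

Section Worlds.
Variables (R : realType) (X : Type).

Definition permute (pi : X -> X) (w : X -> R) : X -> R := fun x => w (pi x).

Definition preorder_on (W : set (X -> R)) (ge : (X -> R) -> (X -> R) -> Prop) :=
  (forall w, W w -> ge w w) /\
  (forall a b c, W a -> W b -> W c -> ge a b -> ge b c -> ge a c).

Definition strictly (ge : (X -> R) -> (X -> R) -> Prop) w v := ge w v /\ ~ ge v w.

Definition strong_pareto (W : set (X -> R)) ge :=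
  forall w v, W w -> W v ->
    (forall x, v x <= w x) -> (exists x, v x < w x) -> strictly ge w v.

Definition permutation_invariance (W : set (X -> R)) ge :=
  forall w v, W w -> W v -> forall pi : X -> X, bijective pi ->
    (ge w v <-> ge (permute pi w) (permute pi v)).

Definition perm_closed (W : set (X -> R)) :=
  forall w (pi : X -> X), W w -> bijective pi -> W (permute pi w).

Definition world_on (A : set X) (k l : R) : X -> R :=
  fun x => if `[< A x >] then k else l.

End Worlds.

(* Main.v *)
Require Import Defs.
From mathcomp Require Import all_boot all_order all_algebra.
From mathcomp Require Import boolp classical_sets functions cardinality reals.
Import Order.TTheory GRing.Theory Num.Theory.
Local Open Scope classical_set_scope.
Local Open Scope ring_scope.
Local Open Scope card_scope.
Set Implicit Arguments. Unset Strict Implicit.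

Lemma inj_of_inf (X : Type) (A : set X) : infinite_set A ->
  exists f : nat -> X, injective f /\ forall n, A (f n).
Proof.
move=> /infiniteP/card_leP[F].
pose f (n : nat) : X := \val (F (SigSub (mem_set (I : setT n)))).
exists f; split.
- move=> m n /val_inj/(@inj _ _ _ F) H.
  have := H (in_setT _) (in_setT _).
  by case.
- move=> n; exact: set_mem (valP _).
Qed.

Lemma enum_of_inf (X : Type) (A : set X) : [set: X] #= [set: nat] -> infinite_set A ->
  exists f : nat -> X, [/\ injective f, forall n, A (f n) & forall x, A x -> exists n, f n = x].
Proof.
move=> HX iA.
have cA : countable A.
  apply: (@sub_countable _ _ _ [set: X]); first exact: subset_card_le.
  by move: HX; rewrite card_eq_le => /andP[].
have := eq_card_nat cA iA; rewrite card_eq_sym => /card_eqP[F].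
pose f (n : nat) : X := \val (F (SigSub (mem_set (I : setT n)))).
exists f; split.
- move=> m n /val_inj/(@inj _ _ _ F) H.
  have := H (in_setT _) (in_setT _).
  by case.
- move=> n; exact: set_mem (valP _).
- move=> x Ax.
  have [[n nT] _ /= E] := (@surj _ _ _ _ F) (SigSub (mem_set Ax)) I.
  exists n; rewrite /f.
  have -> : SigSub (mem_set (I : setT n)) = exist _ n nT :> [set: nat] by apply/val_inj.
  by rewrite E.
Qed.

Section Lift.
Variables (X : Type) (h : bool * nat -> X).
Hypothesis hinj : injective h.

Definition hinv (x : X) : bool * nat := xget (false, 0%N) [set i | h i = x].
Definition lift (p : bool * nat -> bool * nat) (x : X) : X :=
  if `[< exists i, h i = x >] then h (p (hinv x)) else x.

Lemma hinvK i : hinv (h i) = i.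
Proof. by apply: xget_unique => // j /hinj. Qed.

Lemma lift_h p i : lift p (h i) = h (p i).
Proof. by rewrite /lift asboolT ?hinvK //; exists i. Qed.

Lemma lift_out p x : (forall i, h i <> x) -> lift p x = x.
Proof. by move=> H; rewrite /lift asboolF // => -[i /H]. Qed.

Lemma lift_bij p q : cancel p q -> cancel q p -> bijective (lift p).
Proof.
move=> pq qp; apply: (@Bijective _ _ _ (lift q)) => x.
- have [[i <-]|H] := pselect (exists i, h i = x).
    by rewrite !lift_h pq.
  have H' : forall i, h i <> x by move=> i e; apply: H; exists i.
  by rewrite !lift_out.
- have [[i <-]|H] := pselect (exists i, h i = x).
    by rewrite !lift_h qp.
  have H' : forall i, h i <> x by move=> i e; apply: H; exists i.
  by rewrite !lift_out.
Qed.
End Lift.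

Definition swapI (i : bool * nat) : bool * nat := (~~ i.1, i.2).
Definition shiftI (i : bool * nat) : bool * nat :=
  let (b, n) := i in
  if b then (true, n.+1) else (if n is m.+1 then (false, m) else (true, 0%N)).
Definition unshiftI (i : bool * nat) : bool * nat :=
  let (b, n) := i in
  if b then (if n is m.+1 then (true, m) else (false, 0%N)) else (false, n.+1).

Lemma swapIK : cancel swapI swapI.
Proof. by case=> b n; rewrite /swapI /= negbK. Qed.
Lemma shiftIK : cancel shiftI unshiftI.
Proof. by case=> [] [] [|n]. Qed.
Lemma unshiftIK : cancel unshiftI shiftI.
Proof. by case=> [] [] [|n]. Qed.

Lemma key (R : realType) (X : Type) (W : set (X -> R))
  (ge : (X -> R) -> (X -> R) -> Prop) (A B : set X) (k l : R) :
  [set: X] #= [set: nat] ->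
  perm_closed W ->
  preorder_on W ge ->
  strong_pareto W ge ->
  permutation_invariance W ge ->
  infinite_set A -> infinite_set B -> A `&` B = set0 ->
  k != l ->
  W (world_on A k l) -> W (world_on B k l) ->
  ~ ge (world_on A k l) (world_on B k l).
Proof.
move=> HX PC [_ Htr] SP PI /(enum_of_inf HX)[f [finj fA fS]] /(enum_of_inf HX)[g [ginj gB gS]] AB kl Ww Wv H.
have nAB x : A x -> B x -> False.
  by move=> Ax Bx; have : (A `&` B) x by []; rewrite AB.
pose h (i : bool * nat) : X := if i.1 then g i.2 else f i.2.
have hinj : injective h.
  move=> [[] m] [[] n]; rewrite /h /=.
  - by move=> E; rewrite (ginj _ _ E).
  - by move=> E; exfalso; apply: (nAB (f n) (fA n)); rewrite -E.
  - by move=> E; exfalso; apply: (nAB (f m) (fA m)); rewrite E.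
  - by move=> E; rewrite (finj _ _ E).
have hA i : A (h i) <-> i.1 = false.
  case: i => [] [] n; rewrite /h /=; split => //.
  by move=> Ax; exfalso; exact: (nAB _ Ax).
have hB i : B (h i) <-> i.1 = true.
  case: i => [] [] n; rewrite /h /=; split => //.
  by move=> Bx; exfalso; exact: (nAB _ (fA n)).
set w := world_on A k l; set v := world_on B k l.
have wA x : A x -> w x = k by move=> Ax; rewrite /w /world_on asboolT.
have wN x : ~ A x -> w x = l by move=> Ax; rewrite /w /world_on asboolF.
have vB x : B x -> v x = k by move=> Bx; rewrite /v /world_on asboolT.
have vN x : ~ B x -> v x = l by move=> Bx; rewrite /v /world_on asboolF.
have wE x : w x = if `[< A x >] then k else l by [].
have vE x : v x = if `[< B x >] then k else l by [].
set tau := lift h swapI; set sig := lift h shiftI.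
have btau : bijective tau by apply: (lift_bij hinj) swapIK swapIK.
have bsig : bijective sig by apply: (lift_bij hinj) shiftIK unshiftIK.
have outr x : ~ (exists i, h i = x) -> forall i, h i <> x.
  by move=> Hx i e; apply: Hx; exists i.
have outA x : ~ (exists i, h i = x) -> ~ A x.
  by move=> Hx /fS[n E]; apply: Hx; exists (false, n).
have outB x : ~ (exists i, h i = x) -> ~ B x.
  by move=> Hx /gS[n E]; apply: Hx; exists (true, n).
have Etw : permute tau w = v.
  apply/funext => x; rewrite /permute.
  have [[i <-]|Hx0] := pselect (exists i, h i = x); last first.
    rewrite /tau lift_out; last exact: outr.
    by rewrite (wN _ (outA _ Hx0)) (vN _ (outB _ Hx0)).
    rewrite /tau (lift_h hinj); case: i => [] [] n /=.
      by rewrite wA ?vB //; [apply/hB|apply/hA].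
    by rewrite wN ?vN //; [move/hB|move/hA].
have Etv : permute tau v = w.
  apply/funext => x; rewrite /permute.
  have [[i <-]|Hx0] := pselect (exists i, h i = x); last first.
    rewrite /tau lift_out; last exact: outr.
    by rewrite (wN _ (outA _ Hx0)) (vN _ (outB _ Hx0)).
    rewrite /tau (lift_h hinj); case: i => [] [] n /=.
      by rewrite vN ?wN //; [move/hA|move/hB].
    by rewrite vB ?wA //; [apply/hA|apply/hB].
have Hvw : ge v w by have := (PI _ _ Ww Wv tau btau).1 H; rewrite Etw Etv.
have Ww' : W (permute sig w) by apply: PC.
have Wv' : W (permute sig v) by apply: PC.
have H' : ge (permute sig w) (permute sig v) by exact: (PI _ _ Ww Wv sig bsig).1 H.
have P1 x : A (sig x) -> A x.
  have [[i <-]|Hx] := pselect (exists i, h i = x).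
    rewrite /sig (lift_h hinj); case: i => [] [] [|n] /=; rewrite !hA //.
  by rewrite /sig lift_out //; apply: outr.
have P2 x : B x -> B (sig x).
  have [[i <-]|Hx] := pselect (exists i, h i = x).
    rewrite /sig (lift_h hinj); case: i => [] [] [|n] /=; rewrite !hB //.
  by rewrite /sig lift_out //; apply: outr.
set x0 := h (false, 0%N).
have Ax0 : A x0 by apply/hA.
have nBx0 : ~ B x0 by move/hB.
have Bsx0 : B (sig x0) by rewrite /sig /x0 (lift_h hinj); apply/hB.
have nAsx0 : ~ A (sig x0) by rewrite /sig /x0 (lift_h hinj) => /hA.
have wlo y : l <= k -> l <= w y.
  by move=> lk; have [Ay|nAy] := pselect (A y); [rewrite wA|rewrite wN].
have whi y : k <= l -> w y <= l.
  by move=> lk; have [Ay|nAy] := pselect (A y); [rewrite wA|rewrite wN].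
have vlo y : l <= k -> l <= v y.
  by move=> lk; have [Ay|nAy] := pselect (B y); [rewrite vB|rewrite vN].
have vhi y : k <= l -> v y <= l.
  by move=> lk; have [Ay|nAy] := pselect (B y); [rewrite vB|rewrite vN].
have wlo' y : l <= k -> w y <= k.
  by move=> lk; have [Ay|nAy] := pselect (A y); [rewrite wA|rewrite wN].
have vlo' y : l <= k -> v y <= k.
  by move=> lk; have [Ay|nAy] := pselect (B y); [rewrite vB|rewrite vN].
have whi' y : k <= l -> k <= w y.
  by move=> lk; have [Ay|nAy] := pselect (A y); [rewrite wA|rewrite wN].
have vhi' y : k <= l -> k <= v y.
  by move=> lk; have [Ay|nAy] := pselect (B y); [rewrite vB|rewrite vN].
have [lk|kl'] := ltrP l k.
- have lk' := ltW lk.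
  have [_ Hn] : strictly ge w (permute sig w).
    apply: SP => // [x|]; rewrite /permute.
      have [Asx|nAsx] := pselect (A (sig x)).
        by rewrite !wA //; apply: P1.
      by rewrite (wN _ nAsx); apply: wlo.
    by exists x0; rewrite (wN _ nAsx0) wA.
  have [Hv _] : strictly ge (permute sig v) v.
    apply: SP => // [x|]; rewrite /permute.
      have [Bx|nBx] := pselect (B x).
        by rewrite !vB //; apply: P2.
      by rewrite (vN _ nBx); apply: vlo.
    by exists x0; rewrite (vN _ nBx0) vB.
  apply: Hn; apply: (Htr _ _ _ Ww' Wv' Ww H').
  exact: (Htr _ _ _ Wv' Wv Ww Hv Hvw).
- have lk : k < l by rewrite lt_neqAle kl kl'.
  have [_ Hn] : strictly ge (permute sig w) w.
    apply: SP => // [x|]; rewrite /permute.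
      have [Asx|nAsx] := pselect (A (sig x)).
        by rewrite !wA //; apply: P1.
      by rewrite (wN _ nAsx); apply: whi.
    by exists x0; rewrite (wN _ nAsx0) wA.
  have [Hv _] : strictly ge v (permute sig v).
    apply: SP => // [x|]; rewrite /permute.
      have [Bx|nBx] := pselect (B x).
        by rewrite !vB //; apply: P2.
      by rewrite (vN _ nBx); apply: vhi.
    by exists x0; rewrite (vN _ nBx0) vB.
  apply: Hn; apply: (Htr _ _ _ Ww Wv Ww' H).
  exact: (Htr _ _ _ Wv Wv' Ww' Hv ((PI _ _ Wv Ww sig bsig).1 Hvw)).
Qed.

Theorem mainTheorem5 (R : realType) (X : Type) (W : set (X -> R))
  (ge : (X -> R) -> (X -> R) -> Prop) (A B : set X) (k l : R) :
  [set: X] #= [set: nat] ->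
  perm_closed W ->
  preorder_on W ge ->
  strong_pareto W ge ->
  permutation_invariance W ge ->
  infinite_set A -> infinite_set B -> A `&` B = set0 ->
  k != l ->
  W (world_on A k l) -> W (world_on B k l) ->
  ~ ge (world_on A k l) (world_on B k l) /\ ~ ge (world_on B k l) (world_on A k l).
Proof.
move=> HX PC PO SP PI iA iB AB kl WA WB; split.
  exact: (key HX PC PO SP PI iA iB AB kl WA WB).
by apply: (key HX PC PO SP PI iB iA _ kl WB WA); rewrite setIC.
Qed.
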